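(* Let $\mathbf x,\mathbf y$ be the Heegaard states corresponding to lifted partial permutations $(\tilde S,\tilde f)$ and $(\tilde T,\tilde g)$. There exists a compactly supported $\phi\in D(\mathbf x,\mathbf y)$ if and only if $\tilde S=\tilde T$ and $\tilde f(\tilde S)=\tilde g(\tilde T)$. Moreover, if such $\phi$ exists, it is unique.
   Context: Fix integers $0<k<m$. $G_m$ is the group of isometries of $\mathbb R$ generated by $x\mapsto 1-x$ and $x\mapsto 2m-1-x$; $Q_1:\mathbb Z\to\mathbb Z/G_m\cong\{1,\dots,m-1\}$. A lifted partial permutation on $k$ letters is a pair $(\tilde S,\tilde f)$ with $\tilde S\subset\mathbb Z$ $G_m$-invariant, $|\tilde S/G_m|=k$, $\tilde f:\tilde S\to\mathbb Z$ $G_m$-equivariant with injective induced map $\tilde S/G_m\to\mathbb Z/G_m$. In $\mathbb R^2$ take vertical lines $\tilde\alpha_i=\{i\}\times\mathbb R$, horizontal lines $\tilde\beta_i=\mathbb R\times\{i\}$; $\mathbb G_m$ is generated by the $180^\circ$ rotations about $(\frac12,\frac12)$ and $(m-\frac12,m-\frac12)$; $\mathcal H=\mathbb R^2/\mathbb G_m$, with $\alpha_i,\beta_i$ ($1\le i\le m-1$) the images of $\tilde\alpha_j,\tilde\beta_j$ with $Q_1(j)=i$. A $k$-fold Heegaard state is a set of $k$ points each on some $\alpha_i\cap\beta_j$ with distinct $\alpha$'s and distinct $\beta$'s; $(\tilde S,\tilde f)$ corresponds to the image of its graph $\{(i,\tilde f(i))\}$. A two-chain is an assignment of integers to components of $\mathcal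 H\setminus(\boldsymbol\alpha\cup\boldsymbol\beta)$. At an intersection point of $\alpha_i$ and $\beta_j$ with local multiplicities $A,B,C,D$ in the four quadrants (with $A,D$ opposite and $B,C$ opposite, oriented as in the standard convention), the point is an initial corner if $B+C=A+D+1$, a terminal corner if $B+C=A+D-1$, and not a corner if $A+D=B+C$. $D(\mathbf x,\mathbf y)$ is the set of two-chains whose initial corners are exactly the points of $\mathbf x\setminus\mathbf y$ and terminal corners exactly the points of $\mathbf y\setminus\mathbf x$ (with no other corners). *)

(* Defs.v *)
From Stdlib Require Import ZArith List.
Open Scope Z_scope.

Definition refl1 (x : Z) : Z := 1 - x.
Definition refl2 (m : nat) (x : Z) : Z := 2 * Z.of_nat m - 1 - x.

(* orbit relation of the group generated by refl1, refl2 (both involutions) *)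
Inductive zorb (m : nat) (i : Z) : Z -> Prop :=
| zorb_refl : zorb m i i
| zorb_s1 : forall j, zorb m i j -> zorb m i (refl1 j)
| zorb_s2 : forall j, zorb m i j -> zorb m i (refl2 m j).

(* Lifted partial permutation (S~, f~) on k letters.  S~/G_m is counted via
   the identification Z/G_m = {1,...,m-1} given by Q_1. *)
Definition LiftedPartialPerm (m k : nat) (S : Z -> Prop) (f : Z -> Z) : Prop :=
  (forall i, S i -> S (refl1 i) /\ S (refl2 m i)) /\
  (exists l : list Z, NoDup l /\ length l = k /\
     forall i, In i l <-> (1 <= i <= Z.of_nat m - 1 /\ S i)) /\
  (forall i, S i -> f (refl1 i) = refl1 (f i) /\ f (refl2 m i) = refl2 m (f i)) /\
  (forall i j, S i -> S j -> zorb m (f i) (f j) -> zorb m i j).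

(* lattice points (p,q) = intersections of alpha~_p and beta~_q *)
(* 180-degree rotations about (1/2,1/2) and (m-1/2,m-1/2) on lattice points *)
Definition rot1 (P : Z * Z) : Z * Z := (refl1 (fst P), refl1 (snd P)).
Definition rot2 (m : nat) (P : Z * Z) : Z * Z := (refl2 m (fst P), refl2 m (snd P)).

(* components of R^2 \ (alpha~ u beta~): open unit squares, indexed by their
   lower-left corner (a,b) = (a,a+1)x(b,b+1).  A rotation r maps the square
   with corners (a,b),(a+1,b+1) to the square whose lower-left corner is
   r (a+1,b+1). *)
Definition sq_act (r : Z * Z -> Z * Z) (s : Z * Z) : Z * Z :=
  r (fst s + 1, snd s + 1).

Inductive sqorb (m : nat) (s : Z * Z) : Z * Z -> Prop :=
| sqorb_refl : sqorb m s s
| sqorb_s1 : forall t, sqorb m s t -> sqorb m s (sq_act rot1 t)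
| sqorb_s2 : forall t, sqorb m s t -> sqorb m s (sq_act (rot2 m) t).

(* A two-chain on H = R^2 / GG_m: an integer on each component of
   H \ (alpha u beta), i.e. a GG_m-invariant function on squares. *)
Definition TwoChain (m : nat) (phi : Z * Z -> Z) : Prop :=
  forall s, phi (sq_act rot1 s) = phi s /\ phi (sq_act (rot2 m) s) = phi s.

(* compactly supported: only finitely many components of H \ (alpha u beta)
   (= GG_m-orbits of squares) carry nonzero multiplicity *)
Definition CompactSupport (m : nat) (phi : Z * Z -> Z) : Prop :=
  exists L : list (Z * Z),
    forall s, phi s <> 0 -> exists s0, In s0 L /\ sqorb m s0 s.

(* Heegaard state of (S~, f~): image in H of the graph {(i, f~ i)}.
   A lattice point lies over a point of the state iff it is in the graph
   (the graph is GG_m-invariant). *)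
Definition inState (S : Z -> Prop) (f : Z -> Z) (P : Z * Z) : Prop :=
  S (fst P) /\ snd P = f (fst P).

(* local multiplicities at the lattice point P = (p,q):
   A = NW, B = NE, C = SW, D = SE quadrant; A,D opposite; B,C opposite. *)
Definition multA (phi : Z * Z -> Z) (P : Z * Z) : Z := phi (fst P - 1, snd P).
Definition multB (phi : Z * Z -> Z) (P : Z * Z) : Z := phi (fst P, snd P).
Definition multC (phi : Z * Z -> Z) (P : Z * Z) : Z := phi (fst P - 1, snd P - 1).
Definition multD (phi : Z * Z -> Z) (P : Z * Z) : Z := phi (fst P, snd P - 1).

Definition initialCorner (phi : Z * Z -> Z) (P : Z * Z) : Prop :=
  multB phi P + multC phi P = multA phi P + multD phi P + 1.
Definition terminalCorner (phi : Z * Z -> Z) (P : Z * Z) : Prop :=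
  multB phi P + multC phi P = multA phi P + multD phi P - 1.
Definition notCorner (phi : Z * Z -> Z) (P : Z * Z) : Prop :=
  multA phi P + multD phi P = multB phi P + multC phi P.

Definition inD (m : nat) (S : Z -> Prop) (f : Z -> Z) (T : Z -> Prop) (g : Z -> Z)
  (phi : Z * Z -> Z) : Prop :=
  TwoChain m phi /\
  forall P : Z * Z,
    ((inState S f P /\ ~ inState T g P) -> initialCorner phi P) /\
    ((inState T g P /\ ~ inState S f P) -> terminalCorner phi P) /\
    ((~ (inState S f P /\ ~ inState T g P) /\ ~ (inState T g P /\ ~ inState S f P))
       -> notCorner phi P).

Definition imageOf (S : Z -> Prop) (f : Z -> Z) (j : Z) : Prop :=
  exists i, S i /\ f i = j.

(* Main.v *)
Require Import Defs.
From Stdlib Require Import ZArith List Lia Classical ClassicalEpsilon FunctionalExtensionality PropExtensionality.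
Open Scope Z_scope.

Definition ind (P : Prop) : Z := if excluded_middle_informative P then 1 else 0.

Ltac indcase := unfold ind; repeat destruct (excluded_middle_informative _); try lia; exfalso; firstorder lia.

Lemma ind_iff P Q : (P <-> Q) -> ind P = ind Q.
Proof. intros H; indcase. Qed.
Lemma ind1 (P : Prop) : P -> ind P = 1.
Proof. intros; indcase. Qed.
Lemma ind0 (P : Prop) : ~ P -> ind P = 0.
Proof. intros; indcase. Qed.

Fixpoint sumZ (lo : Z) (n : nat) (h : Z -> Z) : Z :=
  match n with O => 0 | Datatypes.S n' => h lo + sumZ (lo + 1) n' h end.

Lemma sumZ_ext lo n h k : (forall i, lo <= i < lo + Z.of_nat n -> h i = k i) ->
  sumZ lo n h = sumZ lo n k.
Proof. revert lo; induction n; intros lo H; cbn [sumZ]; auto.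
  rewrite (H lo) by lia. f_equal. apply IHn. intros i Hi; apply H; lia. Qed.

Lemma sumZ_add lo n h k : sumZ lo n (fun i => h i + k i) = sumZ lo n h + sumZ lo n k.
Proof. revert lo; induction n; intros; cbn [sumZ]; [lia| rewrite IHn; lia]. Qed.

Lemma sumZ_opp lo n h : sumZ lo n (fun i => - h i) = - sumZ lo n h.
Proof. revert lo; induction n; intros; cbn [sumZ]; [lia| rewrite IHn; lia]. Qed.

Lemma sumZ_last lo n h : sumZ lo (Datatypes.S n) h = sumZ lo n h + h (lo + Z.of_nat n).
Proof. revert lo; induction n; intros lo.
  - cbn [sumZ]. replace (lo + Z.of_nat 0) with lo by lia. lia.
  - change (sumZ lo (Datatypes.S (Datatypes.S n)) h) with (h lo + sumZ (lo+1) (Datatypes.S n) h).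
    rewrite IHn. cbn [sumZ].
    replace (lo + 1 + Z.of_nat n) with (lo + Z.of_nat (Datatypes.S n)) by lia. lia.
Qed.

Lemma sumZ_zero lo n h : (forall i, lo <= i < lo + Z.of_nat n -> h i = 0) -> sumZ lo n h = 0.
Proof. revert lo; induction n; intros lo H; cbn [sumZ]; auto.
  rewrite (H lo) by lia. rewrite IHn; [lia|]. intros i Hi; apply H; lia. Qed.

Lemma sumZ_single lo n h p : lo <= p < lo + Z.of_nat n ->
  (forall i, lo <= i < lo + Z.of_nat n -> i <> p -> h i = 0) -> sumZ lo n h = h p.
Proof. revert lo; induction n; intros lo Hp H; [lia|]. cbn [sumZ].
  destruct (Z.eq_dec p lo) as [->|Hne].
  - rewrite sumZ_zero; [lia|]. intros i Hi; apply H; lia.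
  - rewrite (H lo) by lia. rewrite IHn; [lia|lia|]. intros i Hi Hip; apply H; lia. Qed.

Lemma sumZ_shift lo n h c : sumZ (lo + c) n h = sumZ lo n (fun i => h (i + c)).
Proof. revert lo; induction n; intros lo; cbn [sumZ]; auto.
  rewrite <- IHn. replace (lo + c + 1) with (lo + 1 + c) by lia. reflexivity. Qed.

Lemma sumZ_reflect lo n h c :
  sumZ lo n (fun i => h (c - i)) = sumZ (c - lo - Z.of_nat n + 1) n h.
Proof. revert lo; induction n; intros lo; [reflexivity|].
  change (sumZ lo (Datatypes.S n) (fun i => h (c - i))) with (h (c - lo) + sumZ (lo+1) n (fun i => h (c-i))).
  rewrite IHn. rewrite sumZ_last.
  replace (c - lo - Z.of_nat (Datatypes.S n) + 1 + Z.of_nat n) with (c - lo) by lia.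
  replace (c - lo - Z.of_nat (Datatypes.S n) + 1) with (c - (lo + 1) - Z.of_nat n + 1) by lia.
  lia. Qed.

Lemma sumZ_step1 lo n h : h lo = 0 -> h (lo + 1 + Z.of_nat n) = 0 ->
  sumZ lo (Datatypes.S n) h = sumZ (lo + 1) (Datatypes.S n) h.
Proof. intros H1 H2. rewrite (sumZ_last (lo+1)).
  change (sumZ lo (Datatypes.S n) h) with (h lo + sumZ (lo+1) n h). lia. Qed.

Lemma step_const (h : Z -> Z) : (forall q, h q = h (q - 1)) -> forall q q', q <= q' -> h q = h q'.
Proof. intros H q q' Hq.
  assert (forall n : nat, h q = h (q + Z.of_nat n)).
  { induction n. - f_equal; lia. - rewrite IHn, (H (q + Z.of_nat (Datatypes.S n))). f_equal; lia. }
  rewrite (H0 (Z.to_nat (q' - q))). f_equal; lia. Qed.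

Lemma step_mono (h : Z -> Z) : (forall q, h (q - 1) <= h q) -> forall q q', q <= q' -> h q <= h q'.
Proof. intros H q q' Hq.
  assert (forall n : nat, h q <= h (q + Z.of_nat n)).
  { induction n. - rewrite Z.add_0_r; lia. - specialize (H (q + Z.of_nat (Datatypes.S n))).
    replace (q + Z.of_nat (Datatypes.S n) - 1) with (q + Z.of_nat n) in H by lia. lia. }
  specialize (H0 (Z.to_nat (q' - q))). replace (q + Z.of_nat (Z.to_nat (q' - q))) with q' in H0 by lia. lia. Qed.

Lemma no_jump (h : Z -> Z) lo hi q0 : (forall q, h (q - 1) <= h q) -> h q0 = h (q0 - 1) + 1 ->
  lo <= q0 - 1 -> q0 <= hi -> h lo = 0 -> h hi = 0 -> False.
Proof. intros H Hj H1 H2 H3 H4.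
  pose proof (step_mono h H lo (q0 - 1) H1). pose proof (step_mono h H q0 hi H2). lia. Qed.

Definition Dm (m : nat) : Z := 2 * Z.of_nat m - 2.
Definition Inv m (A : Z -> Prop) := forall i, A i -> A (refl1 i) /\ A (refl2 m i).
Definition Eqv m (A : Z -> Prop) (u : Z -> Z) :=
  forall i, A i -> u (refl1 i) = refl1 (u i) /\ u (refl2 m i) = refl2 m (u i).

Lemma A_1m m A p : Inv m A -> A p -> A (1 - p).
Proof. intros HI H. exact (proj1 (HI p H)). Qed.
Lemma A_1m' m A p : Inv m A -> A (1 - p) -> A p.
Proof. intros HI H. pose proof (proj1 (HI _ H)) as H'. unfold refl1 in H'.
  replace (1 - (1 - p)) with p in H' by lia. exact H'. Qed.
Lemma A_tr m A p : Inv m A -> A p -> A (p + Dm m).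
Proof. intros HI H. pose proof (proj2 (HI _ (proj1 (HI p H)))) as H'.
  unfold refl1, refl2, Dm in *. replace (p + (2 * Z.of_nat m - 2)) with (2 * Z.of_nat m - 1 - (1 - p)) by lia. exact H'. Qed.
Lemma A_tr' m A p : Inv m A -> A (p + Dm m) -> A p.
Proof. intros HI H. pose proof (proj1 (HI _ (proj2 (HI _ H)))) as H'.
  unfold refl1, refl2, Dm in *. replace p with (1 - (2 * Z.of_nat m - 1 - (p + (2 * Z.of_nat m - 2)))) by lia. exact H'. Qed.
Lemma u_1m m A u p : Eqv m A u -> A p -> u (1 - p) = 1 - u p.
Proof. intros HE H. exact (proj1 (HE p H)). Qed.
Lemma u_tr m A u p : Inv m A -> Eqv m A u -> A p -> u (p + Dm m) = u p + Dm m.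
Proof. intros HI HE H.
  pose proof (proj2 (HE _ (proj1 (HI p H)))) as H2. pose proof (proj1 (HE p H)) as H1.
  unfold refl1, refl2, Dm in *.
  replace (p + (2 * Z.of_nat m - 2)) with (2 * Z.of_nat m - 1 - (1 - p)) by lia.
  rewrite H2, H1. lia. Qed.

Lemma periodic (D : Z) (Q : Z -> Prop) : 0 < D -> (forall p, Q p -> Q (p + D)) ->
  (forall p, Q (p + D) -> Q p) -> (forall p, 0 <= p < D -> Q p) -> forall p, Q p.
Proof. intros HD H1 H2 H3 p.
  assert (Hn : forall n : nat, forall r, Q r -> Q (r + D * Z.of_nat n) /\ Q (r - D * Z.of_nat n)).
  { induction n; intros r Hr.
    - replace (r + D * Z.of_nat 0) with r by lia. replace (r - D * Z.of_nat 0) with r by lia. auto.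
    - destruct (IHn r Hr) as [Ha Hb]. split.
      + replace (r + D * Z.of_nat (Datatypes.S n)) with ((r + D * Z.of_nat n) + D) by lia. auto.
      + apply H2. replace (r - D * Z.of_nat (Datatypes.S n) + D) with (r - D * Z.of_nat n) by lia. auto. }
  pose proof (Z.div_mod p D ltac:(lia)). pose proof (Z.mod_pos_bound p D HD).
  assert (Hr : Q (p mod D)) by (apply H3; lia).
  destruct (Z_le_gt_dec 0 (p / D)).
  - destruct (Hn (Z.to_nat (p / D)) _ Hr) as [Ha _].
    replace p with (p mod D + D * Z.of_nat (Z.to_nat (p / D))) by lia. exact Ha.
  - destruct (Hn (Z.to_nat (- (p / D))) _ Hr) as [_ Hb].
    replace p with (p mod D - D * Z.of_nat (Z.to_nat (- (p / D)))) by lia. exact Hb.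
Qed.

Lemma list_bound (u : Z -> Z) (l : list Z) : exists C, 1 <= C /\ forall i, In i l -> Z.abs (u i - i) < C.
Proof. induction l as [|a l IH].
  - exists 1. split; [lia|]. intros i [].
  - destruct IH as [C [HC H]]. exists (Z.max C (Z.abs (u a - a) + 1)). split; [lia|].
    intros i [<-|Hi]; [lia|]. specialize (H i Hi). lia. Qed.

Lemma LPP_bound m k A u : (2 <= m)%nat -> LiftedPartialPerm m k A u ->
  exists C, 1 <= C /\ forall p, A p -> Z.abs (u p - p) < C.
Proof. intros Hm [HI [[l [_ [_ Hl]]] [HE _]]].
  destruct (list_bound u l) as [C [HC Hb]]. exists C; split; [exact HC|].
  set (Q := fun p => A p -> Z.abs (u p - p) < C).
  assert (HQ1 : forall p, Q p -> Q (1 - p)).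
  { intros p Hp Hp'. pose proof (A_1m' m A p HI Hp') as Ap. rewrite (u_1m m A u p HE Ap).
    specialize (Hp Ap). lia. }
  assert (HD : 0 < Dm m) by (unfold Dm; lia).
  apply (periodic (Dm m) Q HD).
  - intros p Hp Hp'. pose proof (A_tr' m A p HI Hp') as Ap. rewrite (u_tr m A u p HI HE Ap).
    specialize (Hp Ap). lia.
  - intros p Hp Ap. specialize (Hp (A_tr m A p HI Ap)). rewrite (u_tr m A u p HI HE Ap) in Hp. lia.
  - assert (Hbase : forall p, 1 <= p <= Z.of_nat m - 1 -> Q p).
    { intros p Hp Ap. apply Hb. apply Hl. auto. }
    intros p Hp.
    destruct (Z_le_gt_dec p (Z.of_nat m - 1)).
    + destruct (Z_le_gt_dec 1 p). { apply Hbase; lia. }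
      replace p with (1 - (1 - p)) by lia. apply HQ1, Hbase. lia.
    + intros Ap. pose proof (A_tr' m A (p - Dm m) HI) as T1.
      replace (p - Dm m + Dm m) with p in T1 by lia. specialize (T1 Ap).
      assert (Q (p - Dm m)). { replace (p - Dm m) with (1 - (1 - (p - Dm m))) by lia. apply HQ1, Hbase. unfold Dm in *; lia. }
      specialize (H T1). pose proof (u_tr m A u _ HI HE T1) as E. replace (p - Dm m + Dm m) with p in E by lia.
      rewrite E. lia.
Qed.

Lemma zorb_char m A u i j : Inv m A -> Eqv m A u -> zorb m i j -> A i ->
  A j /\ exists n, (j = i + n * Dm m /\ u j = u i + n * Dm m) \/ (j = 1 - i + n * Dm m /\ u j = 1 - u i + n * Dm m).
Proof. intros HI HE Hz Ai. induction Hz as [|j Hz IH|j Hz IH].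
  - split; auto. exists 0. left. split; lia.
  - destruct IH as [Aj [n Hn]]. split; [exact (proj1 (HI j Aj))|].
    rewrite (proj1 (HE j Aj)). unfold refl1. exists (- n). destruct Hn as [[-> ->]|[-> ->]]; [right|left]; split; lia.
  - destruct IH as [Aj [n Hn]]. split; [exact (proj2 (HI j Aj))|].
    rewrite (proj2 (HE j Aj)). unfold refl2, Dm in *. exists (1 - n). destruct Hn as [[-> ->]|[-> ->]]; [right|left]; split; lia.
Qed.

Lemma LPP_inj m k A u : (2 <= m)%nat -> LiftedPartialPerm m k A u ->
  forall i j, A i -> A j -> u i = u j -> i = j.
Proof. intros Hm [HI [_ [HE Hinj]]] i j Ai Aj Hu.
  assert (Hz : zorb m i j). { apply Hinj; auto. rewrite Hu. constructor. }
  destruct (zorb_char m A u i j HI HE Hz Ai) as [_ [n [[H1 H2]|[H1 H2]]]]; unfold Dm in *.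
  - nia.
  - exfalso. set (t := n * Z.of_nat m) in *. assert (n * (2 * Z.of_nat m - 2) = 2 * t - 2 * n) by (unfold t; ring). lia.
Qed.

Definition Nw (C : Z) : nat := Z.to_nat (2 * C).
Lemma Nw_eq C : 0 <= C -> Z.of_nat (Nw C) = 2 * C.
Proof. intros; unfold Nw; lia. Qed.

Definition Fu (A : Z -> Prop) (u : Z -> Z) C b :=
  sumZ (b - C) (Datatypes.S (Nw C)) (fun p => ind (A p /\ b < u p)).
Definition hb (A : Z -> Prop) (f g : Z -> Z) b p := ind (A p /\ b < g p) + - ind (A p /\ b < f p).
Definition phiC (A : Z -> Prop) (f g : Z -> Z) C (s : Z * Z) : Z :=
  sumZ (snd s - C) (Datatypes.S (Nw C)) (fun p => ind (p <= fst s) * hb A f g (snd s) p).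

Definition Bnd (A : Z -> Prop) (u : Z -> Z) C := forall p, A p -> Z.abs (u p - p) < C.
Definition Inj (A : Z -> Prop) (u : Z -> Z) := forall i j, A i -> A j -> u i = u j -> i = j.

Lemma Fu_step A u C b : 1 <= C -> Bnd A u C -> Inj A u ->
  Fu A u C b = Fu A u C (b - 1) + ind (A (b + C)) - ind (imageOf A u b).
Proof. intros HC Hb Hi. unfold Fu. pose proof (Nw_eq C ltac:(lia)) as HN.
  set (N := Nw C) in *.
  assert (E1 : sumZ (b - C) (Datatypes.S N) (fun p => ind (A p /\ b < u p)) =
     sumZ (b - C) N (fun p => ind (A p /\ b < u p)) + ind (A (b + C))).
  { rewrite sumZ_last. f_equal. replace (b - C + Z.of_nat N) with (b + C) by lia.
    apply ind_iff. split; [tauto|]. intros H; split; auto. specialize (Hb _ H); lia. }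
  assert (E2 : sumZ (b - 1 - C) (Datatypes.S N) (fun p => ind (A p /\ b - 1 < u p)) =
     sumZ (b - C) N (fun p => ind (A p /\ b - 1 < u p))).
  { cbn [sumZ]. replace (b - 1 - C + 1) with (b - C) by lia. rewrite ind0; [lia|].
    intros [H1 H2]. specialize (Hb _ H1); lia. }
  assert (E3 : sumZ (b - C) N (fun p => ind (A p /\ b < u p)) =
     sumZ (b - C) N (fun p => ind (A p /\ b - 1 < u p)) + - sumZ (b - C) N (fun p => ind (A p /\ u p = b))).
  { rewrite <- sumZ_opp, <- sumZ_add. apply sumZ_ext. intros i _.
    destruct (Z_lt_le_dec b (u i)); destruct (Z.eq_dec (u i) b); indcase. }
  assert (E4 : sumZ (b - C) N (fun p => ind (A p /\ u p = b)) = ind (imageOf A u b)).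
  { destruct (classic (imageOf A u b)) as [[p0 [Ap0 Hp0]]|Hn].
    - rewrite (ind1 (imageOf A u b)) by (exists p0; auto).
      rewrite (sumZ_single _ _ _ p0).
      + apply ind1; auto.
      + specialize (Hb _ Ap0). lia.
      + intros i _ Hne. apply ind0. intros [Ai Hui]. apply Hne. apply Hi; auto. congruence.
    - rewrite ind0 by auto. apply sumZ_zero. intros i _. apply ind0. intros [Ai Hui]. apply Hn. exists i; auto. }
  rewrite E1, E2, E3, E4. lia.
Qed.

Lemma Fu_zero2 m A u C : 1 <= C -> Inv m A -> Eqv m A u -> Bnd A u C ->
  2 * Fu A u C 0 = sumZ (1 - C) (Nw C) (fun p => ind (A p)).
Proof. intros HC HI HE Hb. unfold Fu. pose proof (Nw_eq C ltac:(lia)) as HN.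
  set (N := Nw C) in *.
  set (k := fun p => ind (A p /\ u p <= 0)).
  assert (E1 : sumZ (0 - C) (Datatypes.S N) (fun p => ind (A p /\ 0 < u p)) =
               sumZ (0 - C) (Datatypes.S N) (fun p => k (1 - p))).
  { apply sumZ_ext. intros i _. unfold k. apply ind_iff. split.
    - intros [Ai Hu]. split; [apply (A_1m m A i HI Ai)|]. rewrite (u_1m m A u i HE Ai). lia.
    - intros [Ai Hu]. pose proof (A_1m' m A i HI Ai) as Ai'. split; auto.
      rewrite (u_1m m A u i HE Ai') in Hu. lia. }
  rewrite sumZ_reflect in E1.
  replace (1 - (0 - C) - Z.of_nat (Datatypes.S N) + 1) with (1 - C) in E1 by lia.
  assert (E2 : sumZ (0 - C) (Datatypes.S N) (fun p => ind (A p /\ 0 < u p)) =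
     sumZ (1 - C) N (fun p => ind (A p /\ 0 < u p))).
  { cbn [sumZ]. replace (0 - C + 1) with (1 - C) by lia. rewrite ind0; [lia|].
    intros [H1 H2]. specialize (Hb _ H1); lia. }
  assert (E3 : sumZ (1 - C) (Datatypes.S N) k = sumZ (1 - C) N k).
  { rewrite sumZ_last. unfold k at 2. rewrite ind0; [lia|]. intros [H1 H2]. specialize (Hb _ H1); lia. }
  assert (E4 : sumZ (1 - C) N (fun p => ind (A p /\ 0 < u p)) + sumZ (1 - C) N k =
     sumZ (1 - C) N (fun p => ind (A p))).
  { rewrite <- sumZ_add. apply sumZ_ext. intros i _. unfold k. destruct (Z_lt_le_dec 0 (u i)); indcase. }
  lia.
Qed.

Lemma Fu_eq m A f g C : 1 <= C -> Inv m A -> Eqv m A f -> Eqv m A g -> Bnd A f C -> Bnd A g C ->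
  Inj A f -> Inj A g -> (forall j, imageOf A f j <-> imageOf A g j) ->
  forall b, Fu A f C b = Fu A g C b.
Proof. intros HC HI Hf Hg Bf Bg If Ig Him b.
  set (d := fun b => Fu A f C b - Fu A g C b).
  assert (Hd : forall q, d q = d (q - 1)).
  { intros q. unfold d. rewrite (Fu_step A f C q), (Fu_step A g C q) by auto.
    rewrite (ind_iff (imageOf A f q) (imageOf A g q)) by auto. lia. }
  assert (H0 : d 0 = 0).
  { unfold d. pose proof (Fu_zero2 m A f C HC HI Hf Bf). pose proof (Fu_zero2 m A g C HC HI Hg Bg). lia. }
  enough (d b = 0) by (unfold d in *; lia).
  destruct (Z_le_gt_dec b 0).
  - rewrite (step_const d Hd b 0); auto.
  - rewrite <- (step_const d Hd 0 b); auto; lia.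
Qed.

Lemma hb_lo A f g C b p : Bnd A f C -> Bnd A g C -> p <= b - C -> hb A f g b p = 0.
Proof. intros Bf Bg Hp. unfold hb. rewrite !ind0; [lia| |]; intros [H1 H2];
  [specialize (Bf _ H1)|specialize (Bg _ H1)]; lia. Qed.

Lemma hb_hi A f g C b p : Bnd A f C -> Bnd A g C -> b + C <= p -> hb A f g b p = 0.
Proof. intros Bf Bg Hp. unfold hb.
  rewrite (ind_iff (A p /\ b < g p) (A p)), (ind_iff (A p /\ b < f p) (A p)); [lia| |];
  split; try tauto; intros H; split; auto; [specialize (Bf _ H)|specialize (Bg _ H)]; lia. Qed.

Definition Good m A f g C := 1 <= C /\ Inv m A /\ Eqv m A f /\ Eqv m A g /\ Bnd A f C /\ Bnd A g C /\
  Inj A f /\ Inj A g /\ (forall j, imageOf A f j <-> imageOf A g j).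

Lemma sum_hb m A f g C b : Good m A f g C -> sumZ (b - C) (Datatypes.S (Nw C)) (hb A f g b) = 0.
Proof. intros (HC & HI & Hf & Hg & Bf & Bg & If & Ig & Him). unfold hb.
  rewrite sumZ_add, sumZ_opp.
  change (sumZ (b - C) (Datatypes.S (Nw C)) (fun p => ind (A p /\ b < g p))) with (Fu A g C b).
  change (sumZ (b - C) (Datatypes.S (Nw C)) (fun p => ind (A p /\ b < f p))) with (Fu A f C b).
  rewrite (Fu_eq m A f g C) by auto. lia. Qed.

Lemma phi_lo A f g C a b : 0 <= C -> a < b - C -> phiC A f g C (a, b) = 0.
Proof. intros HC H. unfold phiC. cbn [fst snd]. apply sumZ_zero. intros i Hi.
  rewrite ind0 by lia. lia. Qed.

Lemma phi_hi m A f g C a b : Good m A f g C -> b + C <= a -> phiC A f g C (a, b) = 0.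
Proof. intros HG H. pose proof HG as (HC & _). unfold phiC. cbn [fst snd].
  pose proof (Nw_eq C ltac:(lia)).
  rewrite <- (sum_hb m A f g C b HG). apply sumZ_ext. intros i Hi.
  rewrite ind1 by lia. lia. Qed.

Lemma phi_dp m A f g C p q : Good m A f g C ->
  phiC A f g C (p, q) - phiC A f g C (p - 1, q) = hb A f g q p.
Proof. intros HG. pose proof HG as (HC & HI & Hf & Hg & Bf & Bg & _).
  pose proof (Nw_eq C ltac:(lia)). unfold phiC; cbn [fst snd].
  set (W := Datatypes.S (Nw C)).
  assert (E : sumZ (q - C) W (fun r => ind (r <= p) * hb A f g q r) - sumZ (q - C) W (fun r => ind (r <= p - 1) * hb A f g q r)
    = sumZ (q - C) W (fun r => (ind (r <= p) - ind (r <= p - 1)) * hb A f g q r)).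
  { rewrite <- Z.add_opp_r, <- sumZ_opp, <- sumZ_add. apply sumZ_ext; intros; ring. }
  rewrite E.
  assert (Hz : forall r, r <> p -> (ind (r <= p) - ind (r <= p - 1)) * hb A f g q r = 0).
  { intros r Hr. rewrite (ind_iff (r <= p) (r <= p - 1)) by lia. ring. }
  destruct (Z_le_gt_dec (q - C) p); [destruct (Z_lt_le_dec p (q - C + Z.of_nat W))|].
  - rewrite (sumZ_single _ _ _ p) by (auto; lia). rewrite ind1, ind0 by lia. ring.
  - rewrite sumZ_zero by (intros i Hi; apply Hz; lia). unfold W in *.
    rewrite (hb_hi A f g C) by (auto; lia). reflexivity.
  - rewrite sumZ_zero by (intros i Hi; apply Hz; lia).
    rewrite (hb_lo A f g C) by (auto; lia). reflexivity.
Qed.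

Lemma ind_step (P : Prop) q x : ind (P /\ q < x) - ind (P /\ q - 1 < x) = - ind (P /\ x = q).
Proof. destruct (Z_lt_le_dec q x); destruct (Z.eq_dec x q); indcase. Qed.

Definition dl (phi : Z * Z -> Z) p q := phi (p, q) + phi (p - 1, q - 1) - phi (p - 1, q) - phi (p, q - 1).

Lemma phi_dl m A f g C p q : Good m A f g C ->
  dl (phiC A f g C) p q = ind (A p /\ f p = q) - ind (A p /\ g p = q).
Proof. intros HG. unfold dl.
  pose proof (phi_dp m A f g C p q HG). pose proof (phi_dp m A f g C p (q - 1) HG).
  unfold hb in *. pose proof (ind_step (A p) q (g p)). pose proof (ind_step (A p) q (f p)). lia. Qed.

Lemma ind_tr m A u b i : Inv m A -> Eqv m A u ->
  ind (A (i + Dm m) /\ b + Dm m < u (i + Dm m)) = ind (A i /\ b < u i).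
Proof. intros HI HE. apply ind_iff. split.
  - intros [H1 H2]. pose proof (A_tr' m A i HI H1) as Ai. rewrite (u_tr m A u i HI HE Ai) in H2. split; auto; lia.
  - intros [H1 H2]. split; [apply (A_tr m A i HI H1)|]. rewrite (u_tr m A u i HI HE H1). lia. Qed.

Lemma phi_tr m A f g C a b : Good m A f g C ->
  phiC A f g C (a + Dm m, b + Dm m) = phiC A f g C (a, b).
Proof. intros (HC & HI & Hf & Hg & _). unfold phiC; cbn [fst snd].
  replace (b + Dm m - C) with (b - C + Dm m) by lia. rewrite sumZ_shift. apply sumZ_ext. intros i _.
  rewrite (ind_iff (i + Dm m <= a + Dm m) (i <= a)) by lia. unfold hb.
  rewrite (ind_tr m A f), (ind_tr m A g) by auto. reflexivity. Qed.

Lemma ind_refl m A u b p : Inv m A -> Eqv m A u ->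
  ind (A (1 - p) /\ b < u (1 - p)) = ind (A p) - ind (A p /\ - b < u p).
Proof. intros HI HE. destruct (classic (A p)) as [Ap|Ap].
  - pose proof (A_1m m A p HI Ap). rewrite (u_1m m A u p HE Ap). destruct (Z_lt_le_dec (-b) (u p)); indcase.
  - assert (~ A (1 - p)) by (intro H; apply Ap; exact (A_1m' m A p HI H)). indcase. Qed.

Lemma phi_rot m A f g C a b : Good m A f g C ->
  phiC A f g C (- a, - b) = phiC A f g C (a, b).
Proof. intros HG. pose proof HG as (HC & HI & Hf & Hg & Bf & Bg & _).
  pose proof (Nw_eq C ltac:(lia)). unfold phiC; cbn [fst snd].
  set (W := Datatypes.S (Nw C)).
  set (j := fun p => - (ind (a < p) * hb A f g b p)).
  assert (E1 : sumZ (- b - C) W (fun p => ind (p <= - a) * hb A f g (- b) p) = sumZ (- b - C) W (fun p => j (1 - p))).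
  { apply sumZ_ext. intros i _. unfold j. rewrite (ind_iff (i <= - a) (a < 1 - i)) by lia.
    unfold hb. rewrite (ind_refl m A f), (ind_refl m A g) by auto.
    replace (- - b) with b by lia. ring. }
  rewrite sumZ_reflect in E1. replace (1 - (- b - C) - Z.of_nat W + 1) with (b - C + 1) in E1 by (unfold W in *; lia).
  unfold W in E1. rewrite <- (sumZ_step1 (b - C) (Nw C) j) in E1.
  2: { unfold j. rewrite (hb_lo A f g C) by (auto; lia). ring. }
  2: { unfold j. rewrite (hb_hi A f g C) by (auto; lia). ring. }
  fold W in E1. rewrite E1. unfold j. rewrite sumZ_opp.
  pose proof (sum_hb m A f g C b HG) as Hs.
  assert (E2 : sumZ (b - C) W (fun p => ind (p <= a) * hb A f g b p) + sumZ (b - C) W (fun p => ind (a < p) * hb A f g b p)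
     = sumZ (b - C) W (hb A f g b)).
  { rewrite <- sumZ_add. apply sumZ_ext. intros i _. destruct (Z_le_gt_dec i a); indcase. }
  unfold W in *. lia.
Qed.

Lemma phi_two m A f g C : Good m A f g C -> TwoChain m (phiC A f g C).
Proof. intros HG [a b]. split.
  - unfold sq_act, rot1, refl1; cbn [fst snd].
    replace (1 - (a + 1)) with (- a) by lia. replace (1 - (b + 1)) with (- b) by lia.
    apply (phi_rot m); auto.
  - unfold sq_act, rot2, refl2; cbn [fst snd].
    replace (2 * Z.of_nat m - 1 - (a + 1)) with (- a + Dm m) by (unfold Dm; lia).
    replace (2 * Z.of_nat m - 1 - (b + 1)) with (- b + Dm m) by (unfold Dm; lia).
    rewrite (phi_tr m) by auto. apply (phi_rot m); auto.
Qed.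

Lemma sqorb_trD m s t : sqorb m s t -> sqorb m s (fst t + Dm m, snd t + Dm m) /\ sqorb m s (fst t - Dm m, snd t - Dm m).
Proof. intros H. split.
  - assert (E : sq_act (rot2 m) (sq_act rot1 t) = (fst t + Dm m, snd t + Dm m)).
    { destruct t; unfold sq_act, rot1, rot2, refl1, refl2, Dm; cbn [fst snd]; f_equal; lia. }
    rewrite <- E. apply sqorb_s2, sqorb_s1, H.
  - assert (E : sq_act rot1 (sq_act (rot2 m) t) = (fst t - Dm m, snd t - Dm m)).
    { destruct t; unfold sq_act, rot1, rot2, refl1, refl2, Dm; cbn [fst snd]; f_equal; lia. }
    rewrite <- E. apply sqorb_s1, sqorb_s2, H.
Qed.

Lemma sqorb_tr m s n : sqorb m s (fst s + n * Dm m, snd s + n * Dm m).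
Proof.
  assert (H : forall k : nat, sqorb m s (fst s + Z.of_nat k * Dm m, snd s + Z.of_nat k * Dm m) /\
                             sqorb m s (fst s - Z.of_nat k * Dm m, snd s - Z.of_nat k * Dm m)).
  { induction k.
    - cbn [Z.of_nat]. rewrite !Z.mul_0_l, !Z.add_0_r, !Z.sub_0_r. destruct s; split; apply sqorb_refl.
    - destruct IHk as [H1 H2]. apply sqorb_trD in H1. apply sqorb_trD in H2. cbn [fst snd] in *. split.
      + replace (fst s + Z.of_nat (Datatypes.S k) * Dm m) with (fst s + Z.of_nat k * Dm m + Dm m) by lia.
        replace (snd s + Z.of_nat (Datatypes.S k) * Dm m) with (snd s + Z.of_nat k * Dm m + Dm m) by lia. tauto.
      + replace (fst s - Z.of_nat (Datatypes.S k) * Dm m) with (fst s - Z.of_nat k * Dm m - Dm m) by lia.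
        replace (snd s - Z.of_nat (Datatypes.S k) * Dm m) with (snd s - Z.of_nat k * Dm m - Dm m) by lia. tauto. }
  destruct (Z_le_gt_dec 0 n).
  - destruct (H (Z.to_nat n)) as [H1 _]. replace (Z.of_nat (Z.to_nat n)) with n in H1 by lia. exact H1.
  - destruct (H (Z.to_nat (- n))) as [_ H1]. replace (Z.of_nat (Z.to_nat (- n))) with (- n) in H1 by lia.
    replace (fst s + n * Dm m) with (fst s - - n * Dm m) by lia. replace (snd s + n * Dm m) with (snd s - - n * Dm m) by lia.
    exact H1.
Qed.

Definition zr (lo : Z) (n : nat) : list Z := map (fun i => lo + Z.of_nat i) (seq 0 n).
Lemma in_zr lo n x : lo <= x < lo + Z.of_nat n -> In x (zr lo n).
Proof. intros H. unfold zr. apply in_map_iff. exists (Z.to_nat (x - lo)). split; [lia|]. apply in_seq. lia. Qed.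

Lemma cs_of m phi K : (2 <= m)%nat -> 0 <= K -> (forall a b, phi (a, b) <> 0 -> Z.abs (b - a) <= K) ->
  CompactSupport m phi.
Proof. intros Hm HK H.
  exists (flat_map (fun a0 => map (fun d => (a0, a0 + d)) (zr (- K) (Z.to_nat (2 * K + 1)))) (zr 0 (Z.to_nat (Dm m)))).
  intros [a b] Hab. specialize (H a b Hab).
  assert (HD : 0 < Dm m) by (unfold Dm; lia).
  pose proof (Z.div_mod a (Dm m) ltac:(lia)). pose proof (Z.mod_pos_bound a (Dm m) HD).
  exists (a mod Dm m, a mod Dm m + (b - a)). split.
  - apply in_flat_map. exists (a mod Dm m). split; [apply in_zr; lia|].
    apply in_map_iff. exists (b - a). split; auto. apply in_zr; lia.
  - pose proof (sqorb_tr m (a mod Dm m, a mod Dm m + (b - a)) (a / Dm m)) as T. cbn [fst snd] in T.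
    replace (a mod Dm m + a / Dm m * Dm m) with a in T by lia.
    replace (a mod Dm m + (b - a) + a / Dm m * Dm m) with b in T by lia. exact T.
Qed.

Lemma sqorb_inv m s0 s : sqorb m s0 s -> Z.abs (snd s - fst s) = Z.abs (snd s0 - fst s0).
Proof. induction 1 as [|t _ IH|t _ IH]; auto; destruct t; unfold sq_act, rot1, rot2, refl1, refl2 in *; cbn [fst snd] in *; lia. Qed.

Lemma support_bound m phi : CompactSupport m phi -> exists K, forall a b, K < Z.abs (b - a) -> phi (a, b) = 0.
Proof. intros [L HL].
  assert (HK : exists K, forall s0, In s0 L -> Z.abs (snd s0 - fst s0) <= K).
  { clear HL. induction L as [|x L [K IH]]. - exists 0; intros _ []. 
    - exists (Z.max K (Z.abs (snd x - fst x))). intros s0 [<-|H]; [lia|specialize (IH _ H); lia]. }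
  destruct HK as [K HK]. exists K. intros a b Hab. destruct (Z.eq_dec (phi (a, b)) 0) as [|Hn]; auto.
  destruct (HL _ Hn) as [s0 [Hin Hs]]. apply sqorb_inv in Hs. specialize (HK _ Hin). cbn [fst snd] in Hs. lia.
Qed.

Lemma dl_val m S f T g phi p q : inD m S f T g phi ->
  dl phi p q = ind (inState S f (p, q)) - ind (inState T g (p, q)).
Proof. intros [_ H]. destruct (H (p, q)) as (H1 & H2 & H3). clear H.
  unfold initialCorner, terminalCorner, notCorner, multA, multB, multC, multD in *. cbn [fst snd] in *. unfold dl.
  destruct (classic (inState S f (p, q))) as [X|X]; destruct (classic (inState T g (p, q))) as [Y|Y].
  - rewrite !ind1 by auto. specialize (H3 ltac:(tauto)). lia.
  - rewrite ind1, ind0 by auto. specialize (H1 ltac:(tauto)). lia.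
  - rewrite ind0, ind1 by auto. specialize (H2 ltac:(tauto)). lia.
  - rewrite !ind0 by auto. specialize (H3 ltac:(tauto)). lia.
Qed.

Lemma col_arg phi K p q0 : (forall a b, K < Z.abs (b - a) -> phi (a, b) = 0) ->
  (forall q, 0 <= dl phi p q) -> dl phi p q0 = 1 -> False.
Proof. intros HK Hd Hj. set (h := fun q => phi (p, q) - phi (p - 1, q)).
  assert (Hs : forall q, h q - h (q - 1) = dl phi p q) by (intros; unfold h, dl; lia).
  apply (no_jump h (Z.min (p - K - 2) (q0 - 1)) (Z.max (p + K + 2) q0) q0).
  - intros q. specialize (Hs q). specialize (Hd q). lia.
  - specialize (Hs q0). lia.
  - lia. - lia.
  - unfold h. rewrite !HK by lia. lia.
  - unfold h. rewrite !HK by lia. lia.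
Qed.

Lemma row_arg phi K p0 q : (forall a b, K < Z.abs (b - a) -> phi (a, b) = 0) ->
  (forall p, 0 <= dl phi p q) -> dl phi p0 q = 1 -> False.
Proof. intros HK Hd Hj. set (h := fun p => phi (p, q) - phi (p, q - 1)).
  assert (Hs : forall p, h p - h (p - 1) = dl phi p q) by (intros; unfold h, dl; lia).
  apply (no_jump h (Z.min (q - K - 2) (p0 - 1)) (Z.max (q + K + 2) p0) p0).
  - intros p. specialize (Hs p). specialize (Hd p). lia.
  - specialize (Hs p0). lia.
  - lia. - lia.
  - unfold h. rewrite !HK by lia. lia.
  - unfold h. rewrite !HK by lia. lia.
Qed.

Lemma uniq_arg psi K : (forall a b, K < Z.abs (b - a) -> psi (a, b) = 0) ->
  (forall p q, dl psi p q = 0) -> forall a b, psi (a, b) = 0.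
Proof. intros HK Hd.
  assert (H1 : forall p q, psi (p, q) = psi (p - 1, q)).
  { intros p q. set (h := fun q => psi (p, q) - psi (p - 1, q)).
    assert (Hs : forall q, h q = h (q - 1)) by (intros q'; specialize (Hd p q'); unfold h, dl in *; lia).
    pose proof (step_const h Hs q (Z.max q (p + K + 2)) ltac:(lia)) as E. unfold h in E.
    rewrite (HK p (Z.max q (p + K + 2))), (HK (p - 1) (Z.max q (p + K + 2))) in E by lia. lia. }
  intros a b. set (h := fun p => psi (p, b)).
  assert (Hs : forall p, h p = h (p - 1)) by (intros; unfold h; apply H1).
  pose proof (step_const h Hs a (Z.max a (b + K + 2)) ltac:(lia)) as E. unfold h in E.
  rewrite E. apply HK. lia.
Qed.

Lemma dl_neg phi p q : dl (fun s => - phi s) p q = - dl phi p q.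
Proof. unfold dl. lia. Qed.

Theorem mainTheorem4 (m k : nat) (hk : (0 < k)%nat) (hkm : (k < m)%nat)
  (S T : Z -> Prop) (f g : Z -> Z)
  (HS : LiftedPartialPerm m k S f) (HT : LiftedPartialPerm m k T g) :
  ((exists phi : Z * Z -> Z, CompactSupport m phi /\ inD m S f T g phi) <->
     ((forall i, S i <-> T i) /\ (forall j, imageOf S f j <-> imageOf T g j)))
  /\
  (forall phi1 phi2 : Z * Z -> Z,
     CompactSupport m phi1 -> inD m S f T g phi1 ->
     CompactSupport m phi2 -> inD m S f T g phi2 ->
     forall s, phi1 s = phi2 s).
Proof.
  assert (Hm : (2 <= m)%nat) by lia.
  split; [split|].
  - intros [phi [Hcs HD]]. destruct (support_bound m phi Hcs) as [K HK].
    assert (HKn : forall a b, K < Z.abs (b - a) -> (fun s => - phi s) (a, b) = 0).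
    { intros a b H. rewrite HK; auto. }
    split.
    + intros i. split; intros Hi; apply NNPP; intros Hn.
      * apply (col_arg phi K i (f i) HK).
        -- intros q. rewrite (dl_val m S f T g phi i q HD). rewrite (ind0 (inState T g (i, q))).
           2:{ intros [H _]. apply Hn. exact H. } unfold ind; destruct (excluded_middle_informative _); lia.
        -- rewrite (dl_val m S f T g phi i (f i) HD). rewrite ind1, ind0; auto.
           ++ intros [H _]. apply Hn. exact H.
           ++ split; auto.
      * apply (col_arg (fun s => - phi s) K i (g i) HKn).
        -- intros q. rewrite dl_neg, (dl_val m S f T g phi i q HD). rewrite (ind0 (inState S f (i, q))).
           2:{ intros [H _]. apply Hn. exact H. } unfold ind; destruct (excluded_middle_informative _); lia.
        -- rewrite dl_neg, (dl_val m S f T g phi i (g i) HD). rewrite ind0, ind1; auto.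
           ++ split; auto.
           ++ intros [H _]. apply Hn. exact H.
    + intros j. split; intros Hj; apply NNPP; intros Hn.
      * destruct Hj as [p0 [Sp0 Hp0]].
        apply (row_arg phi K p0 j HK).
        -- intros p. rewrite (dl_val m S f T g phi p j HD). rewrite (ind0 (inState T g (p, j))).
           2:{ intros [H1 H2]. apply Hn. exists p. cbn [fst snd] in *. auto. }
           unfold ind; destruct (excluded_middle_informative _); lia.
        -- rewrite (dl_val m S f T g phi p0 j HD). rewrite ind1, ind0; auto.
           ++ intros [H1 H2]. apply Hn. exists p0. cbn [fst snd] in *. auto.
           ++ split; cbn [fst snd]; auto.
      * destruct Hj as [p0 [Tp0 Hp0]].
        apply (row_arg (fun s => - phi s) K p0 j HKn).
        -- intros p. rewrite dl_neg, (dl_val m S f T g phi p j HD). rewrite (ind0 (inState S f (p, j))).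
           2:{ intros [H1 H2]. apply Hn. exists p. cbn [fst snd] in *. auto. }
           unfold ind; destruct (excluded_middle_informative _); lia.
        -- rewrite dl_neg, (dl_val m S f T g phi p0 j HD). rewrite ind0, ind1; auto.
           ++ split; cbn [fst snd]; auto.
           ++ intros [H1 H2]. apply Hn. exists p0. cbn [fst snd] in *. auto.
  - intros [HST Him].
    assert (ET : T = S).
    { apply functional_extensionality. intros i. apply propositional_extensionality. symmetry. apply HST. }
    subst T.
    destruct (LPP_bound m k S f Hm HS) as [Cf [HCf Bf]].
    destruct (LPP_bound m k S g Hm HT) as [Cg [HCg Bg]].
    set (C := Z.max Cf Cg).
    assert (HG : Good m S f g C).
    { pose proof HS as [HI [_ [HEf _]]]. pose proof HT as [_ [_ [HEg _]]].
      refine (conj _ (conj HI (conj HEf (conj HEg (conj _ (conj _ (conj _ (conj _ Him)))))))).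
      - lia.
      - intros p Hp. specialize (Bf p Hp). lia.
      - intros p Hp. specialize (Bg p Hp). lia.
      - exact (LPP_inj m k S f Hm HS).
      - exact (LPP_inj m k S g Hm HT). }
    exists (phiC S f g C). split.
    + apply (cs_of m _ C Hm); [lia|]. intros a b Hab.
      destruct (Z_lt_le_dec a (b - C)). { exfalso; apply Hab; apply phi_lo; lia. }
      destruct (Z_lt_le_dec a (b + C)). { lia. }
      exfalso; apply Hab; apply (phi_hi m); auto.
    + split; [apply (phi_two m); auto|]. intros [p q].
      pose proof (phi_dl m S f g C p q HG) as Hd. unfold dl in Hd.
      unfold initialCorner, terminalCorner, notCorner, multA, multB, multC, multD, inState; cbn [fst snd].
      repeat split.
      * intros [[Sp Hq] Hny]. rewrite ind1, ind0 in Hd; [lia| |split; auto].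
        intros [_ H]. apply Hny; split; auto.
      * intros [[Sp Hq] Hny]. rewrite ind0, ind1 in Hd; [lia|split; auto|].
        intros [_ H]. apply Hny; split; auto.
      * intros [H1 H2].
        destruct (classic (S p /\ q = f p)) as [X|X]; destruct (classic (S p /\ q = g p)) as [Y|Y].
        -- rewrite ind1, ind1 in Hd; [lia|destruct Y; split; auto|destruct X; split; auto].
        -- exfalso; tauto.
        -- exfalso; tauto.
        -- rewrite ind0, ind0 in Hd; [lia| |]; intros [H3 H4]; [apply Y|apply X]; split; auto.
  - intros phi1 phi2 cs1 d1 cs2 d2 [a b].
    destruct (support_bound m phi1 cs1) as [K1 HK1]. destruct (support_bound m phi2 cs2) as [K2 HK2].
    assert (E := uniq_arg (fun s => phi1 s - phi2 s) (Z.max K1 K2)).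
    enough ((fun s => phi1 s - phi2 s) (a, b) = 0) by (cbn in *; lia).
    apply E.
    + intros x y H. rewrite HK1, HK2 by lia. lia.
    + intros p q. pose proof (dl_val m S f T g phi1 p q d1). pose proof (dl_val m S f T g phi2 p q d2).
      unfold dl in *. lia.
Qed.
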